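(* Let $u\in R^{\times}$, $a\in R$. For every right $H_N^q$-comodule algebra map $f:T\to\mathcal{B}_{(u,a)}$ there exist unique $\lambda,\mu,\xi\in R$ such that $f(E)=\lambda$, $f(G)=\mu v_g$ and $f(X)=\lambda v_x+\xi v_g$.
   Context: $R$ is a commutative unital ring, $N\ge2$, and $q\in R$ a root of the $N$-th cyclotomic polynomial over $\mathbb{Z}$. $H_N^q$ is the Taft Hopf algebra over $R$: generated by $g,x$ with $g^N=1$, $x^N=0$, $xg=qgx$, $\Delta(g)=g\otimes g$, $\Delta(x)=1\otimes x+x\otimes g$, $\varepsilon(g)=1$, $\varepsilon(x)=0$; it is free over $R$ with basis $\{g^mx^n:0\le m,n<N\}$. For $u\in R^{\times}$, $a\in R$, $\mathcal{B}_{(u,a)}$ is the $R$-algebra generated by $v_g,v_x$ with $v_g^N=u$, $v_x^N=a$, $v_xv_g=qv_gv_x$, free over $R$ with basis $\{v_g^mv_x^n:0\le m,n<N\}$, and a right $H_N^q$-comodule algebra via $\rho(v_g)=v_g\otimes g$, $\rho(v_x)=1\otimes x+v_x\otimes g$. For each $i\ge1$ let $Z_i^H=\{Z_i^h:h\in H_N^q\}$ be a copy of the $R$-module $H_N^q$ and $T=T(\bigoplus_{i\ge1}Z_i^H)$ the tensor algebra, a right $H_N^q$-comodule algebra via $\delta(Z_i^h)=\sum Z_i^{h_1}\otimes h_2$. Set $E=Z_1^1$, $G=Z_1^g$, $X=Z_1^x$, so $\delta(E)=E\otimes1$, $\delta(G)=G\otimes g$, $\delta(X)=E\otimes x+X\otimes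 g$. *)

(* Defs.v *)
From HB Require Import structures.
From mathcomp Require Import all_boot all_algebra cyclotomic.
From mathcomp Require Import finmap monalg.

Set Implicit Arguments.
Unset Strict Implicit.
Unset Printing Implicit Defensive.

Import GRing.Theory.
Local Open Scope ring_scope.

(* The Taft algebra H = H_N^q and B = B_(u,a) are free R-modules with basis *)
(* indexed by K N = 'I_N * 'I_N : the key (m, n) stands for g^m x^n in H and *)
(* for v_g^m v_x^n in B.  Elements are coefficient vectors {ffun K N -> R^o}. *)
(* For an R-module A, A (x) H is represented by {ffun K N -> A}: the        *)
(* function F stands for  sum_k F k (x) (g^m x^n)_k.                        *)

Section Taft.

Variables (R : comNzRingType) (N : nat) (q u a : R).

Definition Key := ('I_N * 'I_N)%type.

Definition Vec := {ffun Key -> R^o}.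

(* basis vector g^m x^n (resp. v_g^m v_x^n); zero if m or n is >= N *)
Definition bas (m n : nat) : Vec :=
  [ffun k : Key => if ((k.1 : nat) == m) && ((k.2 : nat) == n) then 1 else 0].

(* multiplication of basis elements of H_N^q :
   g^m x^n * g^m' x^n' = q^(n m') g^(m+m' mod N) x^(n+n')  (0 if n+n' >= N) *)
Definition Hprod (k l : Key) : Vec :=
  if ((k.2 : nat) + l.2 < N)%N
  then (q ^+ (k.2 * l.1)) *: bas ((k.1 + l.1) %% N) (k.2 + l.2)
  else 0.

(* multiplication of basis elements of B_(u,a) :
   v_g^m v_x^n * v_g^m' v_x^n' = q^(n m') v_g^(m+m') v_x^(n+n'), reduced by
   v_g^N = u and v_x^N = a *)
Definition Bprod (k l : Key) : Vec :=
  (q ^+ (k.2 * l.1) * (if ((k.1 : nat) + l.1 < N)%N then 1 else u)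
                    * (if ((k.2 : nat) + l.2 < N)%N then 1 else a))
    *: bas ((k.1 + l.1) %% N) ((k.2 + l.2) %% N).

Definition smul (c : Key -> Key -> Vec) (x y : Vec) : Vec :=
  \sum_(k : Key) \sum_(l : Key) (x k * y l) *: c k l.

Definition Hmul := smul Hprod.
Definition Bmul := smul Bprod.

Definition oneV : Vec := bas 0 0.
Definition hg : Vec := bas 1 0.
Definition hx : Vec := bas 0 1.
Definition vg : Vec := bas 1 0.
Definition vx : Vec := bas 0 1.

Section TensH.
Variables (A : lmodType R) (mulA : A -> A -> A) (oneA : A).

Definition tens (b : A) (h : Vec) : {ffun Key -> A} := [ffun j => h j *: b].

Definition tmul (F genG : {ffun Key -> A}) : {ffun Key -> A} :=
  [ffun j => \sum_(k : Key) \sum_(l : Key) Hprod k l j *: mulA (F k) (genG l)].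

Definition tone : {ffun Key -> A} := tens oneA oneV.

Definition tpow (F : {ffun Key -> A}) (n : nat) := iter n (tmul F) tone.
End TensH.

Definition Dg : {ffun Key -> Vec} := tens hg hg.
Definition Dx : {ffun Key -> Vec} := tens oneV hx + tens hx hg.
Definition Delta_bas (k : Key) : {ffun Key -> Vec} :=
  tmul Hmul (tpow Hmul oneV Dg k.1) (tpow Hmul oneV Dx k.2).
Definition Delta (h : Vec) : {ffun Key -> Vec} := \sum_(k : Key) h k *: Delta_bas k.

Definition rho_g : {ffun Key -> Vec} := tens vg hg.
Definition rho_x : {ffun Key -> Vec} := tens oneV hx + tens vx hg.
Definition rho_bas (k : Key) : {ffun Key -> Vec} :=
  tmul Bmul (tpow Bmul oneV rho_g k.1) (tpow Bmul oneV rho_x k.2).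
Definition rho (b : Vec) : {ffun Key -> Vec} := \sum_(k : Key) b k *: rho_bas k.

(* ---- the tensor algebra T = T(oplus_{i>=1} Z_i^H) ----
   The module oplus_{i>=1} Z_i^H is free with basis the symbols
   Z_i^{g^m x^n}; we encode Z_{i+1}^{g^m x^n} by the letter (i, (m,n)) with
   i : nat.  Its tensor algebra is the free associative R-algebra on these
   letters, i.e. the monoid algebra of the free monoid of words. *)
Definition Letter := (nat * Key)%type.
Definition TA := {malg R[{fmonom Letter}]}.

Definition Zgen (i : nat) (h : Vec) : TA := \sum_(k : Key) h k *: << fmu (i, k) >>.

Definition genE : TA := Zgen 0 oneV.
Definition genG : TA := Zgen 0 hg.
Definition genX : TA := Zgen 0 hx.

Definition delta_letter (l : Letter) : {ffun Key -> TA} :=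
  [ffun j => Zgen l.1 (Delta (bas l.2.1 l.2.2) j)].
Definition delta_word (w : {fmonom Letter}) : {ffun Key -> TA} :=
  foldr (fun l acc => tmul (@GRing.mul TA) (delta_letter l) acc)
        (tone (1 : TA)) (w : seq Letter).
Definition delta (t : TA) : {ffun Key -> TA} :=
  \sum_(w <- msupp t) t@_w *: delta_word w.

Definition is_comodule_algebra_map (f : TA -> Vec) : Prop :=
  [/\ (forall s t : TA, f (s + t) = f s + f t),
      (forall (c : R) (t : TA), f (c *: t) = c *: f t),
      f 1 = oneV,
      (forall s t : TA, f (s * t) = Bmul (f s) (f t)) &
      (forall t : TA, rho (f t) = [ffun j => f (delta t j)])].

End Taft.

(* Main.v *)
Require Import Defs.
From HB Require Import structures.
From mathcomp Require Import all_boot all_algebra cyclotomic.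
From mathcomp Require Import finmap monalg.
Local Open Scope ring_scope.
Set Implicit Arguments.
Unset Strict Implicit.
Unset Printing Implicit Defensive.
Import GRing.Theory.

Lemma ffunZ (R : nzRingType) (V : lmodType R) (I : finType) (c : R) (f : {ffun I -> V}) x :
  (c *: f) x = c *: f x.
Proof. by rewrite ffunE. Qed.
Lemma ffunD' (V : zmodType) (I : finType) (f g : {ffun I -> V}) x : (f + g) x = f x + g x.
Proof. by rewrite ffunE. Qed.
Lemma ffun0' (V : zmodType) (I : finType) x : (0 : {ffun I -> V}) x = 0.
Proof. by rewrite ffunE. Qed.

Lemma big_only (V : nmodType) (I : finType) (F : I -> V) i0 :
  (forall i, i != i0 -> F i = 0) -> \sum_i F i = F i0.
Proof. by move=> H; rewrite (bigD1 i0) //= big1 ?addr0 // => i /H. Qed.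

Arguments big_only {V I F} i0 _.
Section S.
Variables (R : comNzRingType) (n : nat) (q u a : R).
Local Notation N := n.+2.
Local Notation K := (Key N).
Local Notation V := (Vec R N).

Definition e (k : K) : V := bas R N k.1 k.2.
Definition o1 : 'I_N := Ordinal (isT : (1 < N)%N).
Definition k00 : K := (ord0, ord0).
Definition k10 : K := (o1, ord0).
Definition k01 : K := (ord0, o1).

Lemma eE (k j : K) : e k j = (j == k)%:R.
Proof.
rewrite ffunE; case: j k => [j1 j2] [k1 k2] /=.
by rewrite xpair_eqE; case: (_ && _).
Qed.

Lemma keyE (j l : K) : (j == l) = (((j.1 : nat) == l.1) && ((j.2 : nat) == l.2))%N.
Proof. by case: j l => [? ?] [? ?]. Qed.

Lemma vec_exp (x : V) : \sum_k x k *: e k = x.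
Proof.
apply/ffunP=> j; rewrite sum_ffunE (big_only j) => [|k kj].
  by rewrite ffunZ eE eqxx; apply: mulr1.
by rewrite ffunZ eE eq_sym (negbTE kj); apply: mulr0.
Qed.

Lemma HprodE (k l j : K) : Hprod q k l j = if (k.2 + l.2 < N)%N then
   q ^+ (k.2 * l.1)%N * (((j.1 : nat) == ((k.1 : nat) + l.1) %% N) && ((j.2 : nat) == (k.2 : nat) + l.2))%N%:R else 0.
Proof.
rewrite /Hprod; case: ifP => _; last by rewrite ffun0'.
by rewrite ffunZ ffunE; case: (_ && _).
Qed.

Lemma BprodE (k l b : K) : Bprod q u a k l b =
   (q ^+ (k.2 * l.1)%N * (if ((k.1 : nat) + l.1 < N)%N then 1 else u)
                    * (if ((k.2 : nat) + l.2 < N)%N then 1 else a)) *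
   (((b.1 : nat) == ((k.1 : nat) + l.1) %% N) && ((b.2 : nat) == ((k.2 : nat) + l.2) %% N))%N%:R.
Proof. by rewrite /Bprod ffunZ ffunE; case: (_ && _). Qed.

Lemma Hprod0l l : Hprod q k00 l = e l.
Proof.
apply/ffunP=> j; rewrite HprodE /= add0n ltn_ord mul0n expr0 mul1r eE.
by rewrite keyE [(0 + _)%N]add0n modn_small.
Qed.

Lemma Hprod0r k : Hprod q k k00 = e k.
Proof.
apply/ffunP=> j; rewrite HprodE /= addn0 ltn_ord muln0 expr0 mul1r eE.
by rewrite keyE -[((k.1 : nat) + _)%N]/(k.1 + 0)%N addn0 modn_small.
Qed.

Lemma Bprod0l l : Bprod q u a k00 l = e l.
Proof.
apply/ffunP=> j; rewrite BprodE /= !add0n !ltn_ord mul0n expr0 !mul1r eE.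
by rewrite keyE !modn_small.
Qed.

Lemma Bprod0r k : Bprod q u a k k00 = e k.
Proof.
apply/ffunP=> j; rewrite BprodE /= !addn0 !ltn_ord muln0 expr0 !mul1r eE.
by rewrite keyE !modn_small.
Qed.

Lemma smul_el (c : K -> K -> V) k (y : V) : smul c (e k) y = \sum_l y l *: c k l.
Proof.
rewrite /smul (big_only k) => [|k' kk']; last first.
  by apply: big1 => l _; rewrite eE (negbTE kk') mul0r scale0r.
by apply: eq_bigr => l _; rewrite eE eqxx mul1r.
Qed.

Lemma smul_er (c : K -> K -> V) (x : V) l : smul c x (e l) = \sum_k x k *: c k l.
Proof.
rewrite /smul; apply: eq_bigr => k _.
rewrite (big_only l) => [|l' ll']; first by rewrite eE eqxx mulr1.
by rewrite eE (negbTE ll') mulr0 scale0r.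
Qed.

Lemma smulZl (c : K -> K -> V) s (x y : V) : smul c (s *: x) y = s *: smul c x y.
Proof.
rewrite /smul scaler_sumr; apply: eq_bigr => k _; rewrite scaler_sumr.
by apply: eq_bigr => l _; rewrite ffunZ scalerA mulrA.
Qed.

Lemma smulZr (c : K -> K -> V) s (x y : V) : smul c x (s *: y) = s *: smul c x y.
Proof.
rewrite /smul scaler_sumr; apply: eq_bigr => k _; rewrite scaler_sumr.
by apply: eq_bigr => l _; rewrite ffunZ scalerA mulrCA.
Qed.

Lemma smulDl (c : K -> K -> V) (x1 x2 y : V) : smul c (x1 + x2) y = smul c x1 y + smul c x2 y.
Proof.
rewrite /smul -big_split; apply: eq_bigr => k _; rewrite -big_split.
by apply: eq_bigr => l _; rewrite ffunD' mulrDl scalerDl.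
Qed.

Lemma Hmul1l (y : V) : Hmul q (oneV R N) y = y.
Proof.
rewrite /Hmul (smul_el _ k00); under eq_bigr do rewrite Hprod0l.
exact: vec_exp.
Qed.

Lemma Hmul1r (x : V) : Hmul q x (oneV R N) = x.
Proof.
rewrite /Hmul (smul_er _ _ k00); under eq_bigr do rewrite Hprod0r.
exact: vec_exp.
Qed.

Lemma Bmul1l (y : V) : Bmul q u a (oneV R N) y = y.
Proof.
rewrite /Bmul (smul_el _ k00); under eq_bigr do rewrite Bprod0l.
exact: vec_exp.
Qed.

Lemma Bmul_elE (k : K) (y : V) b : Bmul q u a (e k) y b = \sum_l y l * Bprod q u a k l b.
Proof. by rewrite /Bmul smul_el sum_ffunE; apply: eq_bigr => l _; rewrite ffunZ. Qed.

Section Tm.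
Variables (A : lmodType R) (mulA : A -> A -> A) (oneA : A).

Lemma tmul_tensl (HZl : forall c x y, mulA (c *: x) y = c *: mulA x y) x k G j :
  tmul q mulA (tens x (e k)) G j = \sum_l Hprod q k l j *: mulA x (G l).
Proof.
rewrite ffunE (big_only k) => [|k' kk']; last first.
  by apply: big1 => l _; rewrite ffunE HZl eE (negbTE kk') scale0r scaler0.
by apply: eq_bigr => l _; rewrite ffunE HZl eE eqxx scale1r.
Qed.

Lemma tmul_tensr y (HZr : forall c x, mulA x (c *: y) = c *: mulA x y) l F j :
  tmul q mulA F (tens y (e l)) j = \sum_k Hprod q k l j *: mulA (F k) y.
Proof.
rewrite ffunE; apply: eq_bigr => k _.
rewrite (big_only l) => [|l' ll']; first by rewrite ffunE HZr eE eqxx scale1r.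
by rewrite ffunE HZr eE (negbTE ll') scale0r scaler0.
Qed.

Lemma tmul_addl (HDl : forall x1 x2 y, mulA (x1 + x2) y = mulA x1 y + mulA x2 y) (F1 F2 G : {ffun K -> A}) :
  tmul q mulA (F1 + F2) G = tmul q mulA F1 G + tmul q mulA F2 G.
Proof.
apply/ffunP=> j; rewrite ffunD' !ffunE -big_split; apply: eq_bigr => k _.
by rewrite -big_split; apply: eq_bigr => l _; rewrite ffunD' HDl scalerDr.
Qed.

Lemma tmul_tone_l (HZl : forall c x y, mulA (c *: x) y = c *: mulA x y)
   (H1 : forall y, mulA oneA y = y) (G : {ffun K -> A}) : tmul q mulA (tone N oneA) G = G.
Proof.
apply/ffunP=> j; rewrite (tmul_tensl HZl oneA k00).
rewrite (big_only j) => [|l lj].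
  by rewrite Hprod0l eE eqxx scale1r H1.
by rewrite Hprod0l eE eq_sym (negbTE lj) scale0r.
Qed.

Lemma tmul_tone_r (HZr : forall c x, mulA x (c *: oneA) = c *: mulA x oneA)
   (H1 : forall x, mulA x oneA = x) (F : {ffun K -> A}) : tmul q mulA F (tone N oneA) = F.
Proof.
apply/ffunP=> j; rewrite (tmul_tensr HZr k00).
rewrite (big_only j) => [|l lj].
  by rewrite Hprod0r eE eqxx scale1r H1.
by rewrite Hprod0r eE eq_sym (negbTE lj) scale0r.
Qed.
End Tm.

End S.

Section S2.
Variables (R : comNzRingType) (n : nat) (q u a : R).
Local Notation N := n.+2.
Local Notation K := (Key N).
Local Notation V := (Vec R N).
Local Notation e := (@e R n).
Local Notation Bm := (Bmul q u a).

Lemma Bmul_ee (k l : K) : Bm (e k) (e l) = Bprod q u a k l.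
Proof.
rewrite /Bmul smul_el (big_only l) => [|l' ll']; first by rewrite eE eqxx scale1r.
by rewrite eE (negbTE ll') scale0r.
Qed.

Lemma Bmul0r (x : V) : Bm x 0 = 0.
Proof. by rewrite /Bmul /smul big1 // => k _; rewrite big1 // => l _; rewrite ffunE mulr0 scale0r. Qed.

Lemma BmulZl c (x y : V) : Bm (c *: x) y = c *: Bm x y.
Proof. exact: smulZl. Qed.
Lemma BmulDl (x1 x2 y : V) : Bm (x1 + x2) y = Bm x1 y + Bm x2 y.
Proof. exact: smulDl. Qed.

Lemma bas_inord m : (m < N)%N -> bas R N m 0 = e (inord m, ord0).
Proof. by move=> lt; rewrite /e /= inordK. Qed.

Lemma Ppow m : (m < N)%N ->
  tpow q Bm (oneV R N) (rho_g R N) m = tens (bas R N m 0) (bas R N m 0).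
Proof.
elim: m => [|m IH] lt; first by [].
rewrite /tpow iterS -/(tpow q Bm (oneV R N) (rho_g R N) m) IH ?(ltnW lt) //.
rewrite !bas_inord ?(ltnW lt) //.
change (rho_g R N) with (tens (e (k10 n)) (e (k10 n))).
apply/ffunP=> j; rewrite (tmul_tensl _ BmulZl).
rewrite (big_only (inord m, ord0)) => [|l ll]; last first.
  by rewrite ffunE eE (negbTE ll) scale0r Bmul0r scaler0.
rewrite [tens _ _ _]ffunE eE eqxx scale1r Bmul_ee.
have -> : Hprod q (k10 n) (inord m, ord0) = e (inord m.+1, ord0).
  apply/ffunP=> i; by rewrite HprodE eE /= mul0n expr0 mul1r keyE /= !inordK ?(ltnW lt) // add1n modn_small.
have -> : Bprod q u a (k10 n) (inord m, ord0) = e (inord m.+1, ord0).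
  apply/ffunP=> i; by rewrite BprodE eE /= mul0n expr0 keyE /= !inordK ?(ltnW lt) // add1n lt mod0n !mul1r modn_small.
by rewrite [RHS]ffunE.
Qed.

Local Notation Qn m := (tpow q Bm (oneV R N) (rho_x R N) m).

Lemma Qstep m j b : Qn m.+1 j b =
  \sum_l Hprod q (k01 n) l j * Qn m l b + \sum_l Hprod q (k10 n) l j * Bm (e (k01 n)) (Qn m l) b.
Proof.
rewrite /tpow iterS -/(tpow q Bm (oneV R N) (rho_x R N) m).
change (rho_x R N) with (tens (e (k00 n)) (e (k01 n)) + tens (e (k01 n)) (e (k10 n))).
rewrite tmul_addl; last exact: BmulDl.
rewrite ffunD' !(tmul_tensl _ BmulZl) ffunD' !sum_ffunE.
congr (_ + _); apply: eq_bigr => l _; rewrite ffunZ //.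
by rewrite Bmul1l.
Qed.

Lemma Qlow m l (b : K) : (m < b.2)%N -> Qn m l b = 0.
Proof.
elim: m l b => [|m IH] l b lt.
  rewrite /tpow /= ffunE ffunZ -[oneV R N b]/(e (k00 n) b) eE.
  have -> : (b == k00 n) = false.
    by apply/negbTE; apply: contraTneq lt => ->.
  by apply: mulr0.
rewrite Qstep big1 ?add0r => [|l' _]; last by rewrite IH ?mulr0 // ltnW.
apply: big1 => l' _; rewrite Bmul_elE big1 ?mulr0 // => i _.
have [lt'|ge'] := ltnP m i.2; first by rewrite IH // mul0r.
rewrite BprodE /=.
have -> : ((b.2 : nat) == (1 + i.2) %% N)%N = false.
  apply/negbTE; rewrite neq_ltn; apply/orP; right.
  by apply: leq_ltn_trans (leq_mod _ _) _; rewrite add1n; apply: leq_ltn_trans lt.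
by rewrite andbF !mulr0.
Qed.

Lemma sRo (x y : R) : x *: (y : R^o) = x * y.
Proof. by []. Qed.

Lemma Qzero m : (m < N)%N -> forall (l : K) (b1 : 'I_N),
  Qn m l (b1, ord0) = ((((l.1 : nat) == 0) && ((l.2 : nat) == m)) && ((b1 : nat) == 0))%N%:R.
Proof.
elim: m => [|m IH] lt l b1.
  rewrite /tpow /= ffunE ffunZ -[oneV R N (b1,ord0)]/(e (k00 n) (b1, ord0)).
  rewrite -[oneV R N l]/(e (k00 n) l) !eE !keyE /= sRo -natrM mulnb.
  by rewrite andbT.
rewrite Qstep [X in _ + X]big1 ?addr0 => [|l' _]; last first.
  rewrite Bmul_elE big1 ?mulr0 // => i _.
  have [lt'|ge'] := ltnP m i.2; first by rewrite Qlow // mul0r.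
  rewrite BprodE /= [((1 + i.2) %% N)%N]modn_small; last first.
    by rewrite add1n; apply: leq_ltn_trans lt; rewrite ltnS.
  by rewrite andbF !mulr0.
under eq_bigr do rewrite IH ?(ltnW lt) //.
rewrite (big_only (ord0, inord m)) => [|l' ll]; last first.
  by move: ll; rewrite keyE /= inordK ?(ltnW lt) // => /negbTE ->; rewrite mulr0.
rewrite HprodE /= inordK ?(ltnW lt) // add1n lt mul1n expr0 mul1r eqxx /=.
by rewrite -natrM mulnb.
Qed.

Lemma rho_bas_key (k j : K) : rho_bas q u a k j (j.1, ord0) = (k == j)%:R.
Proof.
rewrite /rho_bas Ppow ?ltn_ord //.
change (tens (bas R N k.1 0) (bas R N k.1 0)) with (tens (e (k.1, ord0)) (e (k.1, ord0))).
rewrite (tmul_tensl _ BmulZl) sum_ffunE.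
have inner : forall l : K, \sum_i Qn k.2 l i * Bprod q u a (k.1,ord0) i (j.1,ord0) =
   (((l.1:nat)==0) && ((l.2:nat)==k.2))%N%:R * ((j.1 : nat) == k.1)%N%:R.
  move=> l; rewrite (big_only (k00 n)) => [|[i1 i2] ik].
    by rewrite Bprod0r eE -[k00 n]/(ord0, ord0) Qzero ?ltn_ord // keyE /= !andbT.
  have [i20|i2n] := eqVneq (i2 : nat) 0.
    have -> : i2 = ord0 by apply: val_inj.
    rewrite Qzero ?ltn_ord //.
    by move: ik; rewrite keyE /= i20 andbT => /negbTE ->; rewrite andbF mul0r.
  rewrite BprodE /= [(0 + i2)%N]add0n [(i2 %% N)%N]modn_small ?ltn_ord //.
  rewrite [X in (_ && X)](_ : _ = false) ?andbF ?mulr0 //; apply/negbTE; by rewrite eq_sym.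
under eq_bigr => l _ do rewrite ffunZ sRo Bmul_elE inner.
rewrite (big_only (ord0, k.2)) => [|l ll]; last first.
  by move: ll; rewrite keyE /= => /negbTE ->; rewrite mul0r mulr0.
rewrite HprodE /= add0n ltn_ord mul0n expr0 mul1r addn0 modn_small // !eqxx keyE.
rewrite !(eq_sym (k.1 : nat)) !(eq_sym (k.2:nat)).
by case: (_ == _); case: (_ == _); rewrite /= ?mulr1 ?mulr0 ?mul0r.
Qed.

Lemma rho_key (b : V) (j : K) : rho q u a b j (j.1, ord0) = b j.
Proof.
rewrite /rho !sum_ffunE (big_only j) => [|k kj].
  by rewrite !ffunZ rho_bas_key eqxx sRo mulr1.
by rewrite !ffunZ rho_bas_key (negbTE kj) sRo mulr0.
Qed.

End S2.

Section S3.
Variables (R : comNzRingType) (n : nat) (q : R).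
Local Notation N := n.+2.
Local Notation K := (Key N).
Local Notation V := (Vec R N).
Local Notation e := (@e R n).
Local Notation T := (TA R N).

Lemma ZgenZ i c (h : V) : Zgen i (c *: h) = c *: Zgen i h.
Proof. by rewrite /Zgen scaler_sumr; apply: eq_bigr => k _; rewrite ffunZ scalerA. Qed.

Lemma ZgenD i (h1 h2 : V) : Zgen i (h1 + h2) = Zgen i h1 + Zgen i h2.
Proof. by rewrite /Zgen -big_split; apply: eq_bigr => k _; rewrite ffunD' scalerDl. Qed.

Lemma Zgen_e i (k : K) : Zgen i (e k) = << fmu (i, k) >> :> T.
Proof.
rewrite /Zgen (big_only k) => [|k' kk']; first by rewrite eE eqxx scale1r.
by rewrite eE (negbTE kk') scale0r.
Qed.

Lemma deltaU (w : {fmonom Letter N}) : delta q << w >> = delta_word q w.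
Proof. by rewrite /delta msuppU1 big_seq_fset1 mcoeffU1 eqxx scale1r. Qed.

Lemma delta_word1 (l : Letter N) : delta_word q (fmu l) = delta_letter q l.
Proof.
rewrite /delta_word fmuE /=.
apply: tmul_tone_r => [c x|x]; last exact: mulr1.
rewrite mulr1 -(mul_malgC c 1) mulr1 -mul_malgC.
have -> : c%:MP = << c *g (mone : {fmonom (Letter N)}) >> :> T.
  by apply/malgP => k; rewrite mcoeffC.
rewrite !malgM_def fgmulgU fgmulUg; apply: eq_bigr => k _.
by rewrite mulrC mulm1 mul1m.
Qed.

Lemma Delta_e (k : K) : Delta q (e k) = Delta_bas q k.
Proof.
rewrite /Delta (big_only k) => [|k' kk']; first by rewrite eE eqxx scale1r.
by rewrite eE (negbTE kk') scale0r.
Qed.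

Lemma HmulZl c (x y : V) : Hmul q (c *: x) y = c *: Hmul q x y.
Proof. exact: smulZl. Qed.
Lemma HmulZr c (x y : V) : Hmul q x (c *: y) = c *: Hmul q x y.
Proof. exact: smulZr. Qed.

Lemma Delta00 : Delta_bas q (k00 n) = tone N (oneV R N).
Proof.
rewrite /Delta_bas /tpow /=.
by apply: tmul_tone_l => [c x y|y]; [exact: HmulZl | exact: Hmul1l].
Qed.

Lemma Delta10 : Delta_bas q (k10 n) = Dg R N.
Proof.
rewrite /Delta_bas /tpow /=.
have H : forall F, tmul q (Hmul q) F (tone N (oneV R N)) = F.
  by move=> F; apply: tmul_tone_r => [c x|x]; [exact: HmulZr | exact: Hmul1r].
by rewrite !H.
Qed.

Lemma Delta01 : Delta_bas q (k01 n) = Dx R N.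
Proof.
rewrite /Delta_bas /tpow /=.
have H : forall F, tmul q (Hmul q) F (tone N (oneV R N)) = F.
  by move=> F; apply: tmul_tone_r => [c x|x]; [exact: HmulZr | exact: Hmul1r].
rewrite H.
by apply: tmul_tone_l => [c x y|y]; [exact: HmulZl | exact: Hmul1l].
Qed.

Lemma delta_gen (k j : K) : delta q (Zgen 0 (e k)) j = Zgen 0 (Delta_bas q k j).
Proof. by rewrite Zgen_e deltaU delta_word1 ffunE /= -/(e k) Delta_e. Qed.

Lemma deltaE (j : K) : delta q (genE R N) j = oneV R N j *: genE R N.
Proof.
by rewrite (delta_gen (k00 n)) Delta00 ffunE ZgenZ.
Qed.

Lemma deltaG (j : K) : delta q (genG R N) j = hg R N j *: genG R N.
Proof.
by rewrite (delta_gen (k10 n)) Delta10 ffunE ZgenZ.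
Qed.

Lemma deltaX (j : K) : delta q (genX R N) j = hx R N j *: genE R N + hg R N j *: genX R N.
Proof.
by rewrite (delta_gen (k01 n)) Delta01 ffunD' !ffunE ZgenD !ZgenZ.
Qed.

End S3.

Lemma coef2 (R : comNzRingType) (n : nat) (c1 c2 : R) (F1 F2 : Vec R n.+2) (b : Key n.+2) :
  (c1 *: F1 + c2 *: F2) b = c1 * F1 b + c2 * F2 b.
Proof. by rewrite ffunD' !ffunZ. Qed.

Theorem proposition2p2 (R : comNzRingType) (N : nat) (q u a : R) :
  (2 <= N)%N ->
  root (map_poly (fun z : int => z%:~R : R) 'Phi_N) q ->
  (exists v : R, u * v = 1) ->
  forall f : TA R N -> Vec R N,
  is_comodule_algebra_map q u a f ->
  exists lam mu xi : R,
    [/\ f (genE R N) = lam *: oneV R N,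
        f (genG R N) = mu *: vg R N,
        f (genX R N) = lam *: vx R N + xi *: vg R N &
        forall lam' mu' xi' : R,
          [/\ f (genE R N) = lam' *: oneV R N,
              f (genG R N) = mu' *: vg R N &
              f (genX R N) = lam' *: vx R N + xi' *: vg R N] ->
          [/\ lam' = lam, mu' = mu & xi' = xi]].
Proof.
case: N => [|[|n]] // _ _ _ f [fD fZ _ _ fC].
have key : forall t j, f t j = (f (delta q t j)) (j.1, ord0).
  by move=> t j; rewrite -(rho_key q u a (f t)) fC ffunE.
pose lam := f (genE R n.+2) (k00 n).
pose mu := f (genG R n.+2) (k10 n).
pose xi := f (genX R n.+2) (k10 n).
have E0 : oneV R n.+2 = @e R n (k00 n) by [].
have G0 : hg R n.+2 = @e R n (k10 n) by [].
have G1 : vg R n.+2 = @e R n (k10 n) by [].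
have X0 : hx R n.+2 = @e R n (k01 n) by [].
have X1 : vx R n.+2 = @e R n (k01 n) by [].
have HE : f (genE R n.+2) = lam *: oneV R n.+2.
  apply/ffunP=> j; rewrite key deltaE fZ !ffunZ E0 eE !sRo.
  case: eqP => [->|_]; last by rewrite mul0r mulr0.
  by rewrite mul1r mulr1.
have HG : f (genG R n.+2) = mu *: vg R n.+2.
  apply/ffunP=> j; rewrite key deltaG fZ !ffunZ G0 G1 eE !sRo.
  case: eqP => [->|_]; last by rewrite mul0r mulr0.
  by rewrite mul1r mulr1.
have HX : f (genX R n.+2) = lam *: vx R n.+2 + xi *: vg R n.+2.
  have fX2 : forall c1 c2, f (c1 *: genE R n.+2 + c2 *: genX R n.+2) =
      c1 *: f (genE R n.+2) + c2 *: f (genX R n.+2).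
    move=> c1 c2; rewrite (fD (c1 *: genE R n.+2)).
    by congr (_ + _); apply: fZ.
  apply/ffunP=> j; rewrite key deltaX fX2 !coef2 G0 G1 X0 X1 !eE.
  case: (eqVneq j (k01 n)) => [->|j01].
    have -> : (k01 n == k10 n) = false by [].
    by rewrite mul1r mulr1 mul0r mulr0 !addr0.
  rewrite !mul0r mulr0 !add0r.
  case: eqP => [->|_]; last by rewrite mul0r mulr0.
  by rewrite mul1r mulr1.
exists lam, mu, xi; split => // lam' mu' xi' [E' G' X'].
have E'' : lam' = lam.
  move: E'; rewrite HE => /ffunP /(_ (k00 n)).
  by rewrite !ffunZ E0 eE eqxx !sRo !mulr1.
split => //.
  move: G'; rewrite HG => /ffunP /(_ (k10 n)).
  by rewrite !ffunZ G1 eE eqxx !sRo !mulr1.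
move: X'; rewrite HX => /ffunP /(_ (k10 n)).
rewrite !coef2 G1 X1 !eE eqxx; have -> : (k10 n == k01 n) = false by [].
by rewrite !mulr1 !mulr0 !add0r.
Qed.
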